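(* Let $x^\star\in(0,1]$ and $F_f(y;x^\star)=\frac{ye^{(x^\star-2)y}+ye^{-x^\star y}}{2(1-e^{-2y})}$ for $y>0$. Then $F_f(\cdot;x^\star)$ is strictly decreasing on $(1/x^\star,\infty)$. *)

(* Defs.v *)
From Stdlib Require Import Reals Lra.
Open Scope R_scope.

Definition F_f (xs y : R) : R :=
  (y * exp ((xs - 2) * y) + y * exp (- xs * y)) / (2 * (1 - exp (-2 * y))).

(* Main.v *)
Require Import Defs.
From Stdlib Require Import Reals Lra Psatz.
From Coquelicot Require Import Coquelicot.
Open Scope R_scope.

Definition dF (x y : R) : R :=
  let P := exp ((x - 2) * y) + exp (- x * y) in
  let P' := (x - 2) * exp ((x - 2) * y) - x * exp (- x * y) in
  let Q := 2 * (1 - exp (-2 * y)) in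
  let Q' := 4 * exp (-2 * y) in
  - (((P + y * P') * Q - y * P * Q') / (Q * Q)).

Lemma dF_pos (x y : R) : 0 < x -> x <= 1 -> 1 < x * y -> dF x y > 0.
Proof.
  intros hx0 hx1 hxy.
  assert (hy : 0 < y) by nra.
  unfold dF.
  assert (hC : exp (-2 * y) < 1).
  { rewrite <- exp_0. apply exp_increasing. lra. }
  assert (hC0 := exp_pos (-2 * y)).
  set (C := exp (-2 * y)) in *.
  assert (hA : exp ((x - 2) * y) = exp (x * y) * C).
  { unfold C; rewrite <- exp_plus; f_equal; ring. }
  assert (hB : exp (- x * y) = exp ((2 - x) * y) * C).
  { unfold C; rewrite <- exp_plus; f_equal; ring. }
  rewrite hA, hB.
  assert (hU := exp_pos (x * y)). assert (hV := exp_pos ((2 - x) * y)).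
  set (U := exp (x * y)) in *. set (V := exp ((2 - x) * y)) in *.
  assert (hQ : 0 < 2 * (1 - C) * (2 * (1 - C))) by nra.
  assert (hN : (U * C + V * C + y * ((x - 2) * (U * C) - x * (V * C))) * (2 * (1 - C)) -
     y * (U * C + V * C) * (4 * C) < 0).
  { assert (E : (U * C + V * C + y * ((x - 2) * (U * C) - x * (V * C))) * (2 * (1 - C)) -
     y * (U * C + V * C) * (4 * C) = 2 * C * (V * (1 - x*y) - U*C*(1+x*y) + U * (1 - (2-x)*y) - V*C*(1+(2-x)*y))) by ring.
    rewrite E.
    assert (h1 : 0 < V * (x*y - 1)) by (apply Rmult_lt_0_compat; lra).
    assert (h2 : 0 < U*C*(1+x*y)) by (apply Rmult_lt_0_compat; nra).
    assert (h5 : 0 <= (1 - x) * y) by (apply Rmult_le_pos; lra).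
    assert (h3 : 0 < U * ((2-x)*y - 1)) by (apply Rmult_lt_0_compat; lra).
    assert (h4 : 0 < V*C*(1+(2-x)*y)) by (apply Rmult_lt_0_compat; nra).
    nra. }
  assert (0 < - ( ((U * C + V * C + y * ((x - 2) * (U * C) - x * (V * C))) * (2 * (1 - C)) -
     y * (U * C + V * C) * (4 * C)) / (2 * (1 - C) * (2 * (1 - C))))).
  { unfold Rdiv. rewrite Ropp_mult_distr_l. apply Rmult_lt_0_compat. lra.
    apply Rinv_0_lt_compat; lra. }
  lra.
Qed.

Lemma F_deriv (x y : R) : 0 < y -> is_derive (fun y => - F_f x y) y (dF x y).
Proof.
  intros hy.
  assert (hC : exp (-2 * y) < 1).
  { rewrite <- exp_0. apply exp_increasing. lra. }
  unfold F_f, dF.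
  auto_derive.
  - lra.
  - field. lra.
Qed.

Theorem mainTheorem9 (xs : R) (hxs0 : 0 < xs) (hxs1 : xs <= 1) :
  forall y1 y2 : R, 1 / xs < y1 -> y1 < y2 -> F_f xs y2 < F_f xs y1.
Proof.
  intros y1 y2 h1 h2.
  assert (key : forall y, 1 / xs < y -> 1 < xs * y /\ 0 < y).
  { intros y hy. apply (Rmult_lt_compat_l xs) in hy; [|lra].
    replace (xs * (1 / xs)) with 1 in hy by (field; lra).
    split; [lra|nra]. }
  assert (H := incr_function (fun y => - F_f xs y) (1 / xs) p_infty (dF xs)).
  enough (- F_f xs y1 < - F_f xs y2) by lra.
  apply H; simpl; auto.
  - intros y hy _. apply F_deriv. apply key; auto.
  - intros y hy _. apply dF_pos; auto. apply key; auto.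
Qed.
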